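(* Let $G$ be a finite connected simple graph with $n$ vertices and $m\ge n$ edges, $a,b\in\mathbb{C}$, $c=a-b$, $\mathbf d:\ell^2(R(G))\to\ell^2(V(G))$ linear with $\mathbf d\mathbf d^*=\mathbf I_n$, $\mathbf C=a\,\mathbf d^*\mathbf d+b(\mathbf I_{2m}-\mathbf d^*\mathbf d)$ and $\mathbf U=\mathbf S\mathbf C$. Then the eigenvalues of $\mathbf U$ (with algebraic multiplicity) are: (1) $2n$ eigenvalues $\lambda=\frac{c\mu\pm\sqrt{c^2\mu^2+4ab}}{2}$, one pair for each eigenvalue $\mu$ (counted with multiplicity) of the $n\times n$ matrix $\mathbf d\mathbf S\mathbf d^*$; (2) the remaining $2(m-n)$ eigenvalues are $b$ and $-b$, each with multiplicity $m-n$.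
   Context: For a simple graph $G$, $R(G)=\{(u,v),(v,u): uv\in E(G)\}$ is the set of arcs (so $|R(G)|=2m$); for $e=(u,v)$, $e^{-1}=(v,u)$. $\ell^2(V(G))\cong\mathbb{C}^n$ and $\ell^2(R(G))\cong\mathbb{C}^{2m}$ with standard inner products; $\mathbf d^*$ is the adjoint of $\mathbf d$. $\mathbf S$ is the arc-reversal operator on $\ell^2(R(G))$: $(\mathbf S\omega)(e)=\omega(e^{-1})$. $\mathbf I_k$ is the identity of size $k$. *)

(* Defs.v *)
From HB Require Import structures.
From mathcomp Require Import all_boot all_order all_algebra all_field.
Set Implicit Arguments. Unset Strict Implicit. Unset Printing Implicit Defensive.
Import Order.TTheory GRing.Theory Num.Theory.
Local Open Scope ring_scope.

Definition simple_graph (n : nat) (e : rel 'I_n) : Prop :=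
  symmetric e /\ irreflexive e.

Definition connected_graph (n : nat) (e : rel 'I_n) : Prop :=
  forall u v : 'I_n, connect e u v.

Definition nedges (n : nat) (e : rel 'I_n) : nat :=
  #|[set p : 'I_n * 'I_n | e p.1 p.2 && (p.1 < p.2)%N]|.

Definition arc (n : nat) (e : rel 'I_n) := {p : 'I_n * 'I_n | e p.1 p.2}.

(* number of arcs; l^2(R(G)) is identified with algC^(narcs e) via enum_val *)
Definition narcs (n : nat) (e : rel 'I_n) : nat := #|{: arc e}|.

(* arc reversal operator S: (S w)(x) = w(x^{-1}), i.e. S_{x,y} = [y = x^{-1}] *)
Definition arc_rev_mx (n : nat) (e : rel 'I_n) : 'M[algC]_(narcs e) :=
  \matrix_(i, j)
    ((((val (enum_val i)).1 == (val (enum_val j)).2) &&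
      ((val (enum_val i)).2 == (val (enum_val j)).1))%:R).

Definition adjmx (p q : nat) (d : 'M[algC]_(p, q)) : 'M[algC]_(q, p) :=
  (map_mx (@Num.conj _) d)^T.

(* Main.v *)
Require Import Defs.
From HB Require Import structures.
From mathcomp Require Import all_boot all_order all_algebra all_field.
Import Order.TTheory GRing.Theory Num.Theory.
Local Open Scope ring_scope.
From mathcomp Require Import ring zify.
Lemma sylvester (R : comNzRingType) p q (A : 'M[R]_(p, q)) (B : 'M[R]_(q, p)) (l : R) :
  l ^+ q * \det (l%:M - A *m B) = l ^+ p * \det (l%:M - B *m A).
Proof.
pose N := block_mx (l%:M : 'M_p) A B (1%:M : 'M_q).
have E1 : block_mx (1%:M : 'M_p) (- A) 0 (l%:M : 'M_q) *m N
          = block_mx (l%:M - A *m B) 0 (l *: B) (l%:M : 'M_q).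
  rewrite mulmx_block !mul1mx !mul0mx !add0r mulmx1 mul_scalar_mx mulNmx.
  by rewrite subrr mulmx1.
have E2 : block_mx (1%:M : 'M_p) 0 (- B) (l%:M : 'M_q) *m N
          = block_mx (l%:M : 'M_p) A 0 (l%:M - B *m A).
  rewrite mulmx_block !mul1mx !mul0mx !addr0.
  by rewrite mulNmx scalar_mxC addNr mulmx1 addrC mulNmx.
have H1 := congr1 determinant E1; have H2 := congr1 determinant E2.
rewrite !det_mulmx !det_ublock !det_lblock !det1 !mul1r !det_scalar in H1 H2.
by rewrite -H2 H1 mulrC.
Qed.
Lemma schur_ex (k : nat) (A : 'M[algC]_k) :
  exists P T, [/\ P \in unitmx, is_trig_mx T & T = P *m A *m invmx P].
Proof.
case: k A => [|k] A.
  exists 1%:M, A; split; first by rewrite unitmx1.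
  - by apply/is_trig_mxP => -[].
  - by rewrite mul1mx invmx1 mulmx1.
have [P PU PT] := @Schur algC k.+1 A isT.
have Pu := unitarymx_unit PU.
by exists P, (conjmx P A); split => //; apply: conjumx.
Qed.

Lemma trig_mul_diag k (T1 T2 : 'M[algC]_k) i : is_trig_mx T1 -> is_trig_mx T2 ->
  (T1 *m T2) i i = T1 i i * T2 i i.
Proof.
move=> /is_trig_mxP H1 /is_trig_mxP H2; rewrite mxE (bigD1 i) //= big1 ?addr0 //.
move=> j /negbTE nij; case: (ltngtP i j) => [lij|lji|eij].
- by rewrite H1 // mul0r.
- by rewrite H2 // mulr0.
- by move: nij; rewrite (val_inj eij) eqxx.
Qed.

Lemma trig_det k (A : 'M[algC]_k) : exists t : 'I_k -> algC,
  [/\ forall p q : {poly algC},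
        \det (p%:M - q *: map_mx (@polyC _) A) = \prod_i (p - q * (t i)%:P),
      \tr A = \sum_i t i &
      A *m A = 1%:M -> forall i, t i ^+ 2 = 1].
Proof.
have [P [T [Pu Tt TE]]] := @schur_ex k A.
exists (fun i => T i i); split.
- move=> p q.
  have PCu : map_mx (@polyC _) P \in unitmx by rewrite map_unitmx.
  have -> : p%:M - q *: map_mx (@polyC _) A =
    invmx (map_mx (@polyC _) P) *m (p%:M - q *: map_mx (@polyC _) T) *m map_mx (@polyC _) P.
    rewrite TE !map_mxM map_invmx mulmxBr mulmxBl -scalemxAr -scalemxAl.
    rewrite mul_mx_scalar -scalemxAl mulVmx // scalemx1.
    by rewrite !mulmxA mulVmx // mul1mx mulmxKV.
  rewrite !det_mulmx mulrAC -det_mulmx mulVmx // det1 mul1r det_trig.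
    by apply: eq_bigr => i _; rewrite !mxE eqxx mulr1n.
  apply/is_trig_mxP => i j lij; move/is_trig_mxP: Tt => Tt.
  by rewrite !mxE (Tt _ _ lij) -val_eqE ltn_eqF //= mulr0n polyC0 mulr0 subr0.
- have -> : \sum_i T i i = \tr T by [].
  by rewrite TE mxtrace_mulC mulmxA mulVmx // mul1mx.
- move=> AA i; rewrite expr2 -trig_mul_diag // TE.
  by rewrite !mulmxA -(mulmxA (P *m A)) mulVmx // mulmx1 -(mulmxA P) AA mulmx1 mulmxV // mxE eqxx.
Qed.
Section G.
Variables (n : nat) (e : rel 'I_n).
Hypothesis He : simple_graph e.

Lemma ev_inj (i j : 'I_(narcs e)) :
  val (enum_val i) = val (enum_val j) -> i = j.
Proof. by move=> /val_inj /enum_val_inj. Qed.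

Lemma S_sq : arc_rev_mx e *m arc_rev_mx e = 1%:M.
Proof.
case: He => Hsym Hirr.
apply/matrixP => i j; rewrite !mxE.
set x := enum_val i.
have Hr : e (val x).2 (val x).1 by rewrite Hsym (valP x).
pose r : Defs.arc e := exist _ ((val x).2, (val x).1) Hr.
pose k0 : 'I_(narcs e) := enum_rank r.
have ek0 : enum_val k0 = r by rewrite enum_rankK.
rewrite (bigD1 k0) //= big1 ?addr0.
  rewrite !mxE ek0 /= !eqxx /= mul1r.
  apply/eqP; rewrite eqr_nat; apply/eqP; congr nat_of_bool.
  apply/idP/idP.
    by move=> /andP[/eqP h1 /eqP h2]; apply/eqP/ev_inj; rewrite -/x [val x]surjective_pairing h1 h2 -surjective_pairing.
  by move=> /eqP <-; rewrite !eqxx.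
move=> k nk; rewrite !mxE.
case: eqP => [h1|]; last by rewrite mul0r.
case: eqP => [h2|]; last by rewrite mul0r.
exfalso; move/negP: nk; apply; apply/eqP.
apply: ev_inj; rewrite ek0 /= -/x [val (enum_val k)]surjective_pairing -h1 -h2 //.
Qed.

Lemma S_tr : \tr (arc_rev_mx e) = 0.
Proof.
case: He => Hsym Hirr.
rewrite /mxtrace big1 // => i _; rewrite mxE.
case: eqP => [h|] //=.
have := valP (enum_val i); rewrite -h Hirr //.
Qed.

End G.
Lemma narcsE (n : nat) (e : rel 'I_n) : simple_graph e -> narcs e = (nedges e + nedges e)%N.
Proof.
case=> Hsym Hirr.
pose E1 := [set p : 'I_n * 'I_n | e p.1 p.2 && (p.1 < p.2)%N].
pose E2 := [set p : 'I_n * 'I_n | e p.1 p.2 && ~~ (p.1 < p.2)%N].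
have -> : narcs e = #|[set p : 'I_n * 'I_n | e p.1 p.2]|.
  by rewrite /narcs card_sig cardsE.
rewrite -(cardsID E1) /nedges -/E1.
congr (_ + _)%N.
  by apply: eq_card => p; rewrite !inE; case: (e _ _).
have -> : [set p : 'I_n * 'I_n | e p.1 p.2] :\: E1 = [set (p.2, p.1) | p in E1].
  apply/setP => -[u v]; rewrite !inE /=; apply/idP/imsetP.
    case/andP => /negP nl euv; exists (v, u); rewrite ?inE //= Hsym euv /=.
    case: (ltngtP v u) => // h.
      by exfalso; apply: nl; rewrite ?euv h.
    by move: euv; rewrite (val_inj h) Hirr.
  case=> -[x y]; rewrite inE /= => /andP[exy lxy] [-> ->].
  by rewrite Hsym exy andbT /= ltnNge ltnW.
by rewrite card_imset // => -[x y] [z w] [-> ->].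
Qed.

Lemma prod_pm (N m : nat) (t : 'I_N -> algC) (b : algC) : N = (m + m)%N ->
  (forall i, t i ^+ 2 = 1) -> \sum_i t i = 0 ->
  \prod_i ('X - (-b%:P) * (t i)%:P) = (('X - b%:P) * ('X - (-b)%:P)) ^+ m.
Proof.
move=> HN t2 t0.
have tm i : t i != 1 -> t i = -1.
  by move=> h; have := t2 i; move/eqP; rewrite sqrf_eq1 (negbTE h) => /eqP.
pose A := [pred i | t i == 1].
have HA : #|A| = m.
  move: t0; rewrite (bigID A) /=.
  rewrite (eq_bigr (fun _ => 1)); last by move=> i /eqP.
  rewrite [X in _ + X](eq_bigr (fun _ => -1)); last by move=> i /tm.
  rewrite !sumr_const mulNrn => /eqP; rewrite subr_eq0 eqr_nat => /eqP HB.
  have aux (x y : nat) : x = y -> (x + y)%N = N -> x = m by move=> ? ?; lia.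
  apply: (aux _ _ HB); rewrite -[RHS](card_ord N) -(cardC A); congr (_ + _)%N.
have HB : #|(fun i => t i != 1)| = m.
  have HC := cardC A; rewrite card_ord HA in HC.
  have E1 : #|[predC A]| = #|(fun i => t i != 1)| by apply: eq_card.
  have aux (x : nat) : (m + x)%N = N -> x = m by move=> ?; lia.
  by rewrite -E1; apply: aux.
have HA' : #|(fun i => t i == 1)| = m by rewrite -HA; apply: eq_card.
rewrite (bigID A) /=.
rewrite (eq_bigr (fun _ => 'X - (-b)%:P)); last by move=> i /eqP ->; rewrite polyC1 mulr1 polyCN.
rewrite [X in _ * X](eq_bigr (fun _ => 'X - b%:P)); last first.
  by move=> i /tm ->; rewrite polyCN polyC1 mulrN1 opprK.
by rewrite !prodr_const HA' HB exprMn mulrC.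
Qed.

Lemma fac (a b mu : algC) :
  let c := a - b in
  ('X - ((c * mu + sqrtC (c ^+ 2 * mu ^+ 2 + 4 * a * b)) / 2)%:P) *
  ('X - ((c * mu - sqrtC (c ^+ 2 * mu ^+ 2 + 4 * a * b)) / 2)%:P)
  = 'X^2 - (a * b)%:P - c%:P * 'X * mu%:P.
Proof.
move=> c; set r := sqrtC _.
have hr : r ^+ 2 = c ^+ 2 * mu ^+ 2 + 4 * a * b by rewrite sqrtCK.
have h2 : (2 : algC) != 0 by rewrite pnatr_eq0.
have E (u v : algC) : ('X - u%:P) * ('X - v%:P) = 'X^2 - (u + v)%:P * 'X + (u * v)%:P :> {poly algC}.
  by rewrite polyCD polyCM; ring.
rewrite E.
have -> : (c * mu + r) / 2 + (c * mu - r) / 2 = c * mu by field.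
have -> : (c * mu + r) / 2 * ((c * mu - r) / 2) = - (a * b).
  have -> : (c * mu + r) / 2 * ((c * mu - r) / 2) = (c ^+ 2 * mu ^+ 2 - r ^+ 2) / 4 by field.
  by rewrite hr; field.
by rewrite polyCN polyCM; ring.
Qed.

Local Notation fC A := (map_mx (@polyC algC) A).

Theorem corollary3 (n : nat) (e : rel 'I_n)
  (Hsimple : simple_graph e) (Hconn : connected_graph e)
  (Hmn : (n <= nedges e)%N)
  (a b : algC) (d : 'M[algC]_(n, narcs e))
  (Hd : d *m adjmx d = 1%:M)
  (s : seq algC)
  (Hs : char_poly (d *m arc_rev_mx e *m adjmx d) = \prod_(mu <- s) ('X - mu%:P)) :
  let c := a - b in
  let C := a *: (adjmx d *m d) + b *: (1%:M - adjmx d *m d) in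
  let U := arc_rev_mx e *m C in
  char_poly U =
    (\prod_(mu <- s)
        (('X - ((c * mu + sqrtC (c ^+ 2 * mu ^+ 2 + 4 * a * b)) / 2)%:P) *
         ('X - ((c * mu - sqrtC (c ^+ 2 * mu ^+ 2 + 4 * a * b)) / 2)%:P)))
    * ('X - b%:P) ^+ (nedges e - n) * ('X - (- b)%:P) ^+ (nedges e - n).
Proof.
move=> c C U.
set N := narcs e; set m := nedges e.
set Sm := arc_rev_mx e; set dd := adjmx d.
set M := d *m Sm *m dd.
have Hd' : d *m dd = 1%:M := Hd.
have fdd1 : fC d *m fC dd = 1%:M by rewrite -map_mxM Hd' map_mx1.
have SS : Sm *m Sm = 1%:M := @S_sq n e Hsimple.
have CE : C = b%:M + c *: (dd *m d).
  by rewrite /C /c scalerBr scalemx1 scalerBl addrCA addrA.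
pose s' := fC Sm.
have sS : s' *m s' = 1%:M by rewrite -map_mxM SS map_mx1.
pose lam : {poly algC} := ('X - b%:P) * ('X - (- b)%:P).
pose Y := 'X%:M + b%:P *: s'.
pose Am := c%:P *: (s' *m fC dd).
pose Bm := fC d *m Y.
have fU : fC U = b%:P *: s' + c%:P *: (s' *m fC dd *m fC d).
  rewrite /U CE mulmxDr mul_mx_scalar -scalemxAr map_mxD !map_mxZ !map_mxM mulmxA.
  by [].
have XY : ('X%:M - b%:P *: s') *m Y = lam%:M.
  rewrite /Y mulmxDr !mulmxBl mul_scalar_mx mul_mx_scalar -!scalemxAl -!scalemxAr sS.
  rewrite mul_scalar_mx !scalerA (mulrC b%:P) addrA subrK scalemx1 scale_scalar_mx.
  rewrite -raddfB /=; congr (_%:M); rewrite /lam; ring.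
have I1 : lam%:M - Am *m Bm = ('X%:M - fC U) *m Y.
  rewrite fU opprD addrA mulmxBl XY /Am /Bm -scalemxAl -scalemxAl !mulmxA.
  by [].
have I2 : lam%:M - Bm *m Am = ('X^2 - (a*b)%:P)%:M - (c%:P * 'X) *: fC M.
  have -> : Bm *m Am = c%:P *: ('X *: fC M + b%:P *: 1%:M).
    rewrite /Bm /Am -scalemxAr; congr (_ *: _).
    rewrite /M !map_mxM -!mulmxA (mulmxA Y) /Y mulmxDl mul_scalar_mx -scalemxAl sS.
    rewrite mulmxDl mulmxDr -!scalemxAl -!scalemxAr mul1mx fdd1.
    by [].
  rewrite scalerDr !scalerA scalemx1 opprD addrA addrAC -raddfB /=.
  congr (_%:M - _); rewrite /lam /c; ring.
have I3 : \det Y = lam ^+ m.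
  have [t [Ht Htr Hsq]] := @trig_det N Sm.
  have -> : Y = 'X%:M - (- b%:P) *: fC Sm by rewrite /Y scaleNr opprK.
  rewrite Ht; apply: prod_pm.
  - exact: (@narcsE n e Hsimple).
  - exact: Hsq SS.
  - by rewrite -Htr (@S_tr n e Hsimple).
have I4 : \det (('X^2 - (a*b)%:P)%:M - (c%:P * 'X) *: fC M) =
   \prod_(mu <- s) (('X - ((c * mu + sqrtC (c ^+ 2 * mu ^+ 2 + 4 * a * b)) / 2)%:P) *
         ('X - ((c * mu - sqrtC (c ^+ 2 * mu ^+ 2 + 4 * a * b)) / 2)%:P)).
  have [t [Ht _ _]] := @trig_det n M.
  have Hp : perm_eq s [seq t i | i <- index_enum 'I_n].
    apply: prod_XsubC_eq; rewrite -Hs big_map.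
    have -> : char_poly M = \det ('X%:M - 1 *: fC M) by rewrite scale1r.
    by rewrite Ht; apply: eq_bigr => i _; rewrite mul1r.
  rewrite (perm_big _ Hp) big_map Ht; apply: eq_bigr => i _.
  by rewrite fac.
have := @sylvester _ _ _ Am Bm lam.
rewrite I1 I2 I4 det_mulmx I3 => H.
have -> : char_poly U = \det ('X%:M - fC U) by [].
have lam0 : lam != 0 by rewrite mulf_neq0 // polyXsubC_eq0.
rewrite -mulrA -exprMn -/lam.
apply: (@mulfI _ (lam ^+ (n + m))); first by rewrite expf_neq0.
rewrite [_ * lam ^+ m]mulrC mulrA in H.
rewrite exprD H -exprD mulrCA -exprD mulrC.
congr (_ * _); congr (_ ^+ _).
rewrite /N (@narcsE n e Hsimple) -/m.
by rewrite addnAC subnKC.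
Qed.
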